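(* Let $\mathbb{F}\in\{\mathbb{R},\mathbb{C}\}$, $M>N\ge 1$, and let $\mathcal{P}(M,N)$ be the set of Parseval frames for $\mathbb{F}^N$ with $M$ vectors. If $\Psi\in\mathcal{P}(M,N)$ maximizes $TC$ over $\mathcal{P}(M,N)$, then $$\max\{N,M-N\}\leq TC(\Psi)\leq\sqrt{N(M-N)(M-1)}.$$
   Context: A Parseval frame for $\mathbb{F}^N$ is a family $\{\varphi_i\}_{i=1}^M\subseteq\mathbb{F}^N$ whose $N\times M$ matrix $\Phi$ (columns $\varphi_i$) satisfies $\Phi\Phi^*=I$. The total coherence is $TC(\Phi)=\sum_{i\neq j}|\langle\varphi_i,\varphi_j\rangle|$. *)

(* Defs.v *)
From HB Require Import structures.
From mathcomp Require Import all_boot all_order all_algebra.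
From mathcomp Require Import reals complex.
Set Implicit Arguments. Unset Strict Implicit. Unset Printing Implicit Defensive.
Import Order.TTheory GRing.Theory Num.Theory.
Local Open Scope ring_scope.

Section Frames.
Variables (R : realType) (F : pzRingType).
(* conjugation on F (identity for F = R, complex conjugation for F = R[i])
   and modulus |.| : F -> R *)
Variables (conj : F -> F) (absF : F -> R).
Variables (N M : nat).

Definition adjmx (A : 'M[F]_(N, M)) : 'M[F]_(M, N) := \matrix_(i, j) conj (A j i).

Definition parseval (A : 'M[F]_(N, M)) : Prop := A *m adjmx A = 1%:M.

Definition frame_ip (A : 'M[F]_(N, M)) (i j : 'I_M) : F :=
  \sum_(k < N) A k i * conj (A k j).

Definition total_coherence (A : 'M[F]_(N, M)) : R :=
  \sum_(i < M) \sum_(j < M | i != j) absF (frame_ip A i j).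

Definition TC_maximizer (Psi : 'M[F]_(N, M)) : Prop :=
  parseval Psi /\
  forall Phi : 'M[F]_(N, M), parseval Phi ->
    total_coherence Phi <= total_coherence Psi.

Definition TC_bounds (Psi : 'M[F]_(N, M)) : Prop :=
  (maxn N (M - N))%:R <= total_coherence Psi /\
  total_coherence Psi <= Num.sqrt ((N * (M - N) * (M - 1))%:R : R).
End Frames.

(* Main.v *)
Require Import Defs.
From HB Require Import structures.
From mathcomp Require Import all_boot all_order all_algebra.
From mathcomp Require Import reals complex.
From mathcomp Require Import ring lra zify.
Import Order.TTheory GRing.Theory Num.Theory.
Local Open Scope ring_scope.

Lemma cs_sum (R : realFieldType) (T : finType) (A : pred T) (f : T -> R) :
  (\sum_(t | A t) f t) ^+ 2 <= #|A|%:R * \sum_(t | A t) f t ^+ 2.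
Proof.
have E1 : (\sum_(t | A t) f t) ^+ 2 = \sum_(s | A s) \sum_(t | A t) f s * f t.
  by rewrite expr2 mulr_suml; apply: eq_bigr => s _; rewrite mulr_sumr.
have E2 : #|A|%:R * \sum_(t | A t) f t ^+ 2 = \sum_(s | A s) \sum_(t | A t) f t ^+ 2.
  by rewrite sumr_const mulr_natl.
have E3 : \sum_(s | A s) \sum_(t | A t) f t ^+ 2 = \sum_(s | A s) \sum_(t | A t) f s ^+ 2.
  by rewrite exchange_big.
rewrite E1 E2.
have -> : \sum_(s | A s) \sum_(t | A t) f t ^+ 2 =
   \sum_(s | A s) \sum_(t | A t) ((f s ^+ 2 + f t ^+ 2) / 2).
  transitivity ((\sum_(s | A s) \sum_(t | A t) f s ^+ 2 + \sum_(s | A s) \sum_(t | A t) f t ^+ 2) / 2).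
    by rewrite -E3; field.
  rewrite -big_split mulr_suml; apply: eq_bigr => s _.
  by rewrite -big_split mulr_suml.
apply: ler_sum => s _; apply: ler_sum => t _.
have := sqr_ge0 (f s - f t); rewrite sqrrB; lra.
Qed.

Arguments cs_sum {R T}.

Lemma tc_real (R : rcfType) (M N : nat) (n : 'I_M -> 'I_M -> R) :
  (N <= M)%N -> (1 <= M)%N -> (forall i j, 0 <= n i j) ->
  \sum_i \sum_j n i j ^+ 2 = N%:R -> \sum_i n i i = N%:R ->
  \sum_(i < M) \sum_(j < M | i != j) n i j <= Num.sqrt ((N * (M - N) * (M - 1))%:R).
Proof.
move=> NM M1 n0 S2 S1.
set r := fun i : 'I_M => \sum_(j < M | i != j) n i j.
have H1 : forall i, r i ^+ 2 <= (M%:R - 1) * (\sum_j n i j ^+ 2 - n i i ^+ 2).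
  move=> i; have := cs_sum (fun j => i != j) (n i).
  have -> : #|(fun j : 'I_M => i != j)| = M.-1.
    have := cardC1 i; rewrite card_ord => <-; apply: eq_card => j; by rewrite !inE eq_sym.
  rewrite [X in X - n i i ^+ 2](bigD1 i) //= addrC addrK.
  have -> : \sum_(j < M | j != i) n i j ^+ 2 = \sum_(j < M | i != j) n i j ^+ 2.
    by apply: eq_bigl => j; rewrite eq_sym.
  by rewrite -subn1 natrB.
have H2 := cs_sum (fun _ : 'I_M => true) r.
have H3 := cs_sum (fun _ : 'I_M => true) (fun i => n i i).
rewrite card_ord S1 in H3.
rewrite card_ord in H2.
have H4 : \sum_i r i ^+ 2 <= (M%:R - 1) * (N%:R - \sum_i n i i ^+ 2).
  rewrite -S2 -sumrB mulr_sumr; apply: ler_sum => i _; exact: H1.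
set T := \sum_i r i in H2 *.
set Q := \sum_i n i i ^+ 2 in H3 H4.
set P := \sum_i r i ^+ 2 in H2 H4.
have T0 : 0 <= T by apply: sumr_ge0 => i _; apply: sumr_ge0.
have HM : (1 : R) <= M%:R by rewrite ler1n.
have HT : T ^+ 2 <= N%:R * (M%:R - N%:R) * (M%:R - 1) by nra.
rewrite -(ger0_norm T0) -sqrtr_sqr; apply: ler_wsqrtr.
by rewrite !natrM !natrB.
Qed.

Lemma upper_generic (R : realType) (F : comNzRingType) (conj : F -> F) (absF : F -> R)
  (emb : {rmorphism R -> F}) (M N : nat) (A : 'M[F]_(N, M)) :
  injective emb -> (forall x y, conj (x + y) = conj x + conj y) -> conj 0 = 0 ->
  (forall x y, conj (x * y) = conj x * conj y) -> (forall x, conj (conj x) = x) ->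
  (forall x, 0 <= absF x) -> (forall x, emb (absF x ^+ 2) = x * conj x) ->
  (forall r, 0 <= r -> absF (emb r) = r) ->
  (N <= M)%N -> (1 <= M)%N -> parseval conj A ->
  total_coherence conj absF A <= Num.sqrt ((N * (M - N) * (M - 1))%:R).
Proof.
move=> embI conjD conj0 conjM conjK abs0 embabs absemb NM M1 PA.
have conj_sum : forall (I : finType) (f : I -> F), conj (\sum_i f i) = \sum_i conj (f i).
  by move=> I f; apply: (big_morph conj conjD conj0).
set B := adjmx conj A.
set G := B *m A.
have GE : forall i j, G i j = \sum_k conj (A k i) * A k j.
  by move=> i j; rewrite !mxE; apply: eq_bigr => k _; rewrite mxE.
have fipE : forall i j, frame_ip conj A i j = G j i.
  by move=> i j; rewrite GE; apply: eq_bigr => k _; rewrite mulrC.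
have GG : G *m G = G.
  by rewrite /G mulmxA -(mulmxA B) PA mulmx1.
have trG : \tr G = N%:R.
  by rewrite /G mxtrace_mulC PA mxtrace1.
apply: tc_real => //.
- have : emb (\sum_i \sum_j absF (frame_ip conj A i j) ^+ 2) = emb N%:R.
    rewrite rmorph_nat rmorph_sum -trG -GG /mxtrace.
    apply: eq_bigr => i _; rewrite rmorph_sum mxE; apply: eq_bigr => j _.
    rewrite embabs fipE.
    rewrite [RHS]mulrC; congr (_ * _); rewrite !GE conj_sum; apply: eq_bigr => k _.
    by rewrite conjM conjK mulrC.
  exact: embI.
- apply: embI; rewrite rmorph_nat rmorph_sum -trG.
  apply: eq_bigr => i _; rewrite -fipE.
  have -> : frame_ip conj A i i = emb (\sum_k absF (A k i) ^+ 2).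
    by rewrite rmorph_sum; apply: eq_bigr => k _; rewrite embabs.
  by rewrite absemb // sumr_ge0 // => k _; rewrite sqr_ge0.
Qed.

Lemma sum_delta (R : pzRingType) n (k : nat) (F : nat -> R) :
  \sum_(j < n) (j == k :> nat)%:R * F j = if (k < n)%N then F k else 0.
Proof.
rewrite -(@big_ord1_eq R 0 +%R) [RHS]big_mkcond /=; apply: eq_bigr => j _.
by case: eqP => _; rewrite ?mul1r ?mul0r.
Qed.

Lemma sum_delta' (R : pzRingType) n (k : nat) (F : nat -> R) :
  \sum_(j < n) (k == j :> nat)%:R * F j = if (k < n)%N then F k else 0.
Proof. by rewrite -sum_delta; apply: eq_bigr => j _; rewrite eq_sym. Qed.

Lemma sum_const_lt (R : pzRingType) (M a : nat) (c : R) :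
  (a <= M)%N -> \sum_(j < M | (j < a)%N) c = c *+ a.
Proof.
move=> aM; rewrite (big_ord_narrow (F := fun _ => c) aM).
by rewrite sumr_const card_ord.
Qed.

Lemma sum_const_ge (R : pzRingType) (M a : nat) (c : R) :
  (a <= M)%N -> \sum_(j < M | ~~ (j < a)%N) c = c *+ (M - a).
Proof.
move=> aM; have E : \sum_(j < M) c = \sum_(j < M | (j < a)%N) c + \sum_(j < M | ~~ (j < a)%N) c.
  exact: bigID.
rewrite sumr_const card_ord sum_const_lt // in E.
have E2 : c *+ M = c *+ a + c *+ (M - a) by rewrite -mulrnDr subnKC.
by apply: (addrI (c *+ a)); rewrite -E -E2.
Qed.

Lemma sum_except (R : pzRingType) (I : finType) (P : pred I) (i : I) (c : R) :
  P i -> \sum_(j | P j && (i != j)) c = \sum_(j | P j) c - c.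
Proof.
move=> Pi; rewrite [in RHS](bigD1 i) //= addrAC subrr add0r.
by apply: eq_bigl => j; rewrite eq_sym.
Qed.

Lemma sub_sum (R : realDomainType) (I : finType) (P Q : pred I) (F : I -> R) :
  (forall i, P i -> 0 <= F i) -> \sum_(i | P i && Q i) F i <= \sum_(i | P i) F i.
Proof.
move=> F0; rewrite [X in _ <= X](bigID Q) /= lerDl.
by apply: sumr_ge0 => i /andP[Pi _]; apply: F0.
Qed.

Arguments sum_delta {R}. Arguments sum_delta' {R}. Arguments sub_sum {R I}.

Arguments sum_const_lt {R}. Arguments sum_const_ge {R}. Arguments sum_except {R I}.
Lemma sub_sumT (R : realDomainType) (I : finType) (Q : pred I) (F : I -> R) :
  (forall i, 0 <= F i) -> \sum_(i | Q i) F i <= \sum_i F i.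
Proof. by move=> F0; have := sub_sum xpredT Q F (fun i _ => F0 i). Qed.

Arguments sub_sumT {R I}.
Section CaseB.
Variables (R : realType) (N M : nat).
Hypotheses (hN : (1 <= N)%N) (hNM : (N < M)%N).

Let q : R := Num.sqrt (N.+1)%:R.
Let s : R := q^-1.
Let a : R := (q * (q - 1))^-1.

Let q2 : q ^+ 2 = N.+1%:R. Proof. by rewrite sqr_sqrtr. Qed.
Let NE : (N%:R : R) = q ^+ 2 - 1. Proof. rewrite q2 -natr1; ring. Qed.
Let q0 : q != 0.
Proof. by rewrite sqrtr_eq0 -ltNge ltr0n. Qed.
Let q1 : q - 1 != 0.
Proof.
rewrite subr_eq0; apply/eqP => h; move: q2; rewrite h expr1n => /eqP.
have -> : (1 : R) = 1%:R by [].
rewrite eqr_nat => /eqP [] N0; move: hN; by rewrite -N0.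
Qed.

Definition PhiB : 'M[R]_(N, M) := \matrix_(k, j)
  (if (j < N)%N then (j == k :> nat)%:R - a else if (j == N :> nat) then s else 0).

Lemma idA : N%:R * a ^+ 2 - 2 * a + s ^+ 2 = 0.
Proof. rewrite NE /a /s; field; by rewrite q0 q1. Qed.

Lemma idB : 1 - N%:R * a = - s ^+ 2 * q.
Proof. rewrite NE /a /s; field; by rewrite q0 q1. Qed.

Lemma parsevalB : parseval (fun x : R => x) PhiB.
Proof.
apply/matrixP => k l; rewrite !mxE.
under eq_bigr do rewrite !mxE.
set G := fun j : nat => ((j == k :> nat)%:R - a) * ((j == l :> nat)%:R - a).
have -> : \sum_(j < M) (if (j < N)%N then (j == k :> nat)%:R - a
      else if (j == N :> nat) then s else 0) *
   (if (j < N)%N then (j == l :> nat)%:R - a else if (j == N :> nat) then s else 0)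
  = \sum_(j < M) ((if (j < N)%N then G j else 0) + (j == N :> nat)%:R * (s * s)).
  apply: eq_bigr => j _; case: (ltnP j N) => h.
    by rewrite (ltn_eqF h) mul0r addr0.
  by case: eqP => _; rewrite ?mul1r ?mul0r ?mulr0 ?add0r.
rewrite big_split /= -big_mkcond /= (sum_delta M N (fun _ => s * s)) hNM.
rewrite (big_ord_narrow (F := G) (ltnW hNM)) /G /=.
have -> : \sum_(i < N) (((i == k :> nat)%:R - a) * ((i == l :> nat)%:R - a)) =
   \sum_(i < N) ((i == k :> nat)%:R * ((i == l :> nat)%:R - a) +
                 ((i == l :> nat)%:R * (- a) + a ^+ 2)).
  by apply: eq_bigr => i _; ring.
rewrite big_split /= big_split /=.
rewrite (sum_delta N k (fun j => (j == l :> nat)%:R - a)) (sum_delta N l (fun _ => - a)).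
rewrite !ltn_ord sumr_const card_ord.
have Ekl : ((k : nat) == l) = (k == l) by [].
rewrite Ekl -expr2 -mulr_natl; have := idA; lra.
Qed.


Let sq : s * q = 1. Proof. by rewrite /s mulVf. Qed.

Let L1 (i j : nat) : (i < N)%N -> (j < N)%N ->
  \sum_(k < N) (((i == k :> nat)%:R - a) * ((j == k :> nat)%:R - a)) =
  (j == i)%:R - a + (- a + N%:R * a ^+ 2).
Proof.
move=> hi hj.
have -> : \sum_(k < N) (((i == k :> nat)%:R - a) * ((j == k :> nat)%:R - a)) =
   \sum_(k < N) ((i == k :> nat)%:R * ((j == k :> nat)%:R - a) +
                 ((j == k :> nat)%:R * (- a) + a ^+ 2)).
  by apply: eq_bigr => k _; ring.
rewrite big_split /= big_split /=.
rewrite (sum_delta' N i (fun k => (j == k :> nat)%:R - a)) (sum_delta' N j (fun _ => - a)).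
by rewrite sumr_const card_ord hi hj mulr_natl.
Qed.

Let L2 (i : nat) : (i < N)%N ->
  \sum_(k < N) (((i == k :> nat)%:R - a) * s) = - s ^+ 2.
Proof.
move=> hi.
have -> : \sum_(k < N) (((i == k :> nat)%:R - a) * s) =
   \sum_(k < N) ((i == k :> nat)%:R * s + (- a * s)).
  by apply: eq_bigr => k _; ring.
rewrite big_split /= (sum_delta' N i (fun _ => s)) hi sumr_const card_ord -mulr_natl.
rewrite NE /a /s; field; by rewrite q0 q1.
Qed.

Lemma gramB (i j : 'I_M) : (i < N.+1)%N -> (j < N.+1)%N -> i != j ->
  frame_ip (fun x : R => x) PhiB i j = - s ^+ 2.
Proof.
move=> hi hj ij; rewrite /frame_ip; under eq_bigr do rewrite !mxE.
move: hi; rewrite ltnS leq_eqVlt => /orP [/eqP iN | iN];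
  move: hj; rewrite ltnS leq_eqVlt => /orP [/eqP jN | jN].
- have : i == j by apply/eqP/val_inj; rewrite /= iN jN.
  by rewrite (negbTE ij).
- rewrite iN ltnn eqxx jN /=.
  rewrite -(L2 _ jN); apply: eq_bigr => k _; exact: mulrC.
- rewrite jN ltnn eqxx iN /=; exact: L2.
- rewrite iN jN L1 //.
  have -> : (j == i :> nat) = false by apply/negbTE; rewrite eq_sym.
  rewrite (_ : (false%:R : R) = 0) //; have := idA; lra.
Qed.

Lemma tcB : N%:R <= total_coherence (fun x : R => x) (fun x : R => `|x|) PhiB.
Proof.
rewrite /total_coherence.
set F := fun i j => `|frame_ip (fun x : R => x) PhiB i j|.
have H2 := sub_sumT (fun i : 'I_M => (i < N.+1)%N) (fun i => \sum_(j < M | i != j) F i j)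
  (fun i => sumr_ge0 _ (fun j _ => normr_ge0 _)).
have step : \sum_(i < M | (i < N.+1)%N) \sum_(j < M | (i != j) && (j < N.+1)%N) F i j = N%:R.
  have -> : \sum_(i < M | (i < N.+1)%N) \sum_(j < M | (i != j) && (j < N.+1)%N) F i j =
            \sum_(i < M | (i < N.+1)%N) (s ^+ 2 *+ N.+1 - s ^+ 2).
    apply: eq_bigr => i hi.
    rewrite -(sum_const_lt _ _ _ hNM) -(sum_except _ i) //.
    rewrite [RHS](eq_bigl (fun j => (i != j) && (j < N.+1)%N)); last by move=> j; rewrite andbC.
    apply: eq_bigr => j /andP [ij hj].
    by rewrite /F (gramB _ _ hi hj ij) normrN (ger0_norm (sqr_ge0 s)).
  rewrite (sum_const_lt _ _ _ hNM) -(mulr_natl (s ^+ 2)) -(mulr_natl (_ - _)).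
  rewrite -q2 NE /s.
  have qq : q ^+ 2 * q^-1 ^+ 2 = 1 by rewrite exprVn mulfV // expf_neq0.
  set c := q^-1 ^+ 2 in qq *; set p := q ^+ 2 in qq *.
  by rewrite mulrBr mulrA -(mulrA p p c) qq mulr1.
rewrite -step; apply: le_trans H2; apply: ler_sum => i _; apply: sub_sum => j _; exact: normr_ge0.
Qed.

End CaseB.



Section CaseA.
Variables (R : realType) (N M : nat).
Hypotheses (hN : (1 <= N)%N) (hNM : (N < M)%N).

Let K := (M - N.-1)%N.
Let q : R := Num.sqrt K%:R.
Let s : R := q^-1.
Let n1M : (N.-1 <= M)%N. Proof. lia. Qed.
Let n1N : (N.-1 < N)%N. Proof. lia. Qed.
Let K0 : (0 < K)%N. Proof. rewrite /K; lia. Qed.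
Let KE : K = (M - N).+1. Proof. rewrite /K; lia. Qed.
Let q2 : q ^+ 2 = K%:R. Proof. by rewrite sqr_sqrtr. Qed.
Let q0 : q != 0. Proof. by rewrite sqrtr_eq0 -ltNge ltr0n. Qed.
Let sK : s ^+ 2 *+ K = 1.
Proof. by rewrite -mulr_natr -q2 /s exprVn mulVf // expf_neq0. Qed.

Definition PhiA : 'M[R]_(N, M) := \matrix_(k, j)
  (if (j < N.-1)%N then (j == k :> nat)%:R else (k == N.-1 :> nat)%:R * s).

Lemma parsevalA : parseval (fun x : R => x) PhiA.
Proof.
apply/matrixP => k l; rewrite !mxE.
under eq_bigr do rewrite !mxE.
rewrite (bigID (fun j : 'I_M => (j < N.-1)%N)) /=.
rewrite (eq_bigr (fun j : 'I_M => (j == k :> nat)%:R * (j == l :> nat)%:R)); last first.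
  by move=> j ->.
rewrite [X in _ + X](eq_bigr (fun _ => (k == N.-1 :> nat)%:R * s * ((l == N.-1 :> nat)%:R * s))); last first.
  by move=> j /negbTE ->.
rewrite (big_ord_narrow (F := fun j : 'I_M => (j == k :> nat)%:R * (j == l :> nat)%:R) n1M) /=.
rewrite (sum_delta N.-1 k (fun j => (j == l :> nat)%:R)).
rewrite (sum_const_ge _ _ _ n1M) -/K.
have Ekl : ((k : nat) == l) = (k == l) by [].
case: (ltnP k N.-1) => hk.
  by rewrite Ekl (ltn_eqF hk) mul0r mul0r mul0rn addr0.
have kE : (k : nat) = N.-1 by move: (ltn_ord k) hk; lia.
rewrite kE eqxx add0r mul1r.
have -> : (k == l) = ((l : nat) == N.-1) by rewrite -Ekl kE eq_sym.
case: eqP => _; last by rewrite !mul0r mulr0 mul0rn.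
by rewrite mul1r -expr2.
Qed.


Lemma gramA (i j : 'I_M) : ~~ (i < N.-1)%N -> ~~ (j < N.-1)%N ->
  frame_ip (fun x : R => x) PhiA i j = s ^+ 2.
Proof.
move=> /negbTE hi /negbTE hj; rewrite /frame_ip; under eq_bigr do rewrite !mxE hi hj.
rewrite (eq_bigr (fun k : 'I_N => (k == N.-1 :> nat)%:R * (s * ((k == N.-1 :> nat)%:R * s)))); last first.
  by move=> k _; rewrite mulrA.
by rewrite (sum_delta N N.-1 (fun k => s * ((k == N.-1 :> nat)%:R * s))) n1N eqxx mul1r.
Qed.

Lemma tcA : (M - N)%:R <= total_coherence (fun x : R => x) (fun x : R => `|x|) PhiA.
Proof.
rewrite /total_coherence.
set F := fun i j => `|frame_ip (fun x : R => x) PhiA i j|.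
have H2 := sub_sumT (fun i : 'I_M => ~~ (i < N.-1)%N) (fun i => \sum_(j < M | i != j) F i j)
  (fun i => sumr_ge0 _ (fun j _ => normr_ge0 _)).
have step : \sum_(i < M | ~~ (i < N.-1)%N) \sum_(j < M | (i != j) && ~~ (j < N.-1)%N) F i j
   = (M - N)%:R.
  have -> : \sum_(i < M | ~~ (i < N.-1)%N) \sum_(j < M | (i != j) && ~~ (j < N.-1)%N) F i j =
            \sum_(i < M | ~~ (i < N.-1)%N) (s ^+ 2 *+ K - s ^+ 2).
    apply: eq_bigr => i hi.
    rewrite -(sum_const_ge _ _ _ n1M) -(sum_except _ i) //.
    rewrite [RHS](eq_bigl (fun j => (i != j) && ~~ (j < N.-1)%N)); last by move=> j; rewrite andbC.
    apply: eq_bigr => j /andP [ij hj].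
    by rewrite /F (gramA _ _ hi hj) (ger0_norm (sqr_ge0 s)).
  rewrite (sum_const_ge _ _ _ n1M) -/K sK mulrnBl sK KE.
  by rewrite mulrSr addrK.
rewrite -step; apply: le_trans H2; apply: ler_sum => i _; apply: sub_sum => j _; exact: normr_ge0.
Qed.

End CaseA.

Local Open Scope complex_scope.

Lemma normc_real (R : realType) (x : R) : Normc.normc (x%:C) = `|x|.
Proof. by rewrite /Normc.normc /= expr0n /= addr0 sqrtr_sqr. Qed.

Lemma transfer (R : realType) (N M : nat) (A : 'M[R]_(N, M)) :
  parseval (fun x : R => x) A ->
  parseval (@conjc R) (map_mx (real_complex R) A) /\
  total_coherence (@conjc R) (@Normc.normc R) (map_mx (real_complex R) A) =
  total_coherence (fun x : R => x) (fun x : R => `|x|) A.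
Proof.
move=> PA; split.
  apply/matrixP => k l; move/matrixP: PA => /(_ k l).
  rewrite !mxE => E.
  have -> : \sum_j map_mx (real_complex R) A k j * adjmx (@conjc R) (map_mx (real_complex R) A) j l
     = (\sum_j A k j * adjmx (fun x : R => x) A j l)%:C.
    rewrite rmorph_sum; apply: eq_bigr => j _; rewrite !mxE conjc_real.
    by rewrite rmorphM.
  by rewrite E rmorph_nat.
apply: eq_bigr => i _; apply: eq_bigr => j _.
rewrite -normc_real; congr (Normc.normc _).
rewrite /frame_ip rmorph_sum; apply: eq_bigr => k _.
by rewrite !mxE conjc_real rmorphM.
Qed.

Theorem proposition3 (R : realType) (M N : nat) (hN : (1 <= N)%N) (hNM : (N < M)%N) :
  (* F = R *)
  (forall Psi : 'M[R]_(N, M),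
     TC_maximizer (fun x : R => x) (fun x : R => `|x|) Psi ->
     TC_bounds (fun x : R => x) (fun x : R => `|x|) Psi) /\
  (* F = C = R[i] *)
  (forall Psi : 'M[R[i]]_(N, M),
     TC_maximizer (@conjc R) (@Normc.normc R) Psi ->
     TC_bounds (@conjc R) (@Normc.normc R) Psi).
Proof.
have NM : (N <= M)%N by lia.
have M1 : (1 <= M)%N by lia.
split.
- move=> Psi [PPsi Pmax]; split.
  + case: (leqP (M - N) N) => h.
    *
      have H1 := tcB R N M hN hNM. have H2 := Pmax _ (parsevalB R N M hN hNM).
      exact: le_trans H1 H2.
    *
      have H1 := tcA R N M hN hNM. have H2 := Pmax _ (parsevalA R N M hN hNM).
      exact: le_trans H1 H2.
  + apply: (@upper_generic R R (fun x => x) (fun x => `|x|) idfun M N Psi) => //.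
    * by move=> x /=; rewrite real_normK ?expr2 // num_real.
    * by move=> r /= r0; rewrite ger0_norm.
- move=> Psi [PPsi Pmax]; split.
  + case: (leqP (M - N) N) => h.
    *
      have [P1 T1] := transfer R N M _ (parsevalB R N M hN hNM).
      by apply: le_trans (tcB R N M hN hNM) _; rewrite -T1; exact: Pmax.
    *
      have [P1 T1] := transfer R N M _ (parsevalA R N M hN hNM).
      by apply: le_trans (tcA R N M hN hNM) _; rewrite -T1; exact: Pmax.
  + apply: (@upper_generic R R[i] (@conjc R) (@Normc.normc R) (real_complex R) M N Psi) => //.
    * exact: complexI.
    * by move=> x y; rewrite rmorphD.
    * exact: conjc0.
    * by move=> x y; rewrite rmorphM.
    * exact: conjcK.
    * by case=> a b; rewrite /Normc.normc sqrtr_ge0.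
    * move=> x; rewrite rmorphXn -sqr_normc //.
    * by move=> r r0; rewrite normc_real ger0_norm.
Qed.
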